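(* Let $F$ be an indexed group with degree map $\deg: F\to\mathbb{Z}$, let $G$ be a group, let $H$ be a subgroup of $G$, and let $\Phi$ be a set of homomorphisms $F\to G$ with the following two properties. (I) $\Phi$ is invariant under conjugation by elements of $H$: if $h\in H$ and $\varphi\in\Phi$, then the homomorphism $\psi: f\mapsto h^{-1}\varphi(f)h$ lies in $\Phi$. (II) For any $\varphi\in\Phi$ and any $h$ in the $\varphi$-core $H_\varphi$ of $H$, the homomorphism $\psi: F\to G$ defined by $\psi(f)=\varphi(f)$ for all $f\in F$ with $\deg f=0$ and $\psi(f_1)=\varphi(f_1)h$ for some element $f_1\in F$ of degree one (equivalently, for all degree-one elements) belongs to $\Phi$. Then $|\Phi|$ is divisible by $|H|$.
   Context: An indexed group is a group $F$ equipped with a surjective homomorphism $\deg: F\to\mathbb{Z}$ (the degree). For $x,y$ in a group, $x^y=y^{-1}xy$, and for a subgroup $H$, $H^y=y^{-1}Hy$; $C(X)$ denotes the centraliser of a subset $X$. For a homomorphism $\varphi: F\to G$ from an indexed group and a subgroup $H\le G$, the $\varphi$-core of $H$ is $H_\varphi=\bigcap_{f\in F}H^{\varphi(f)}\cap C(\{\varphi(f)\mid \deg f=0\})$, i.e. the set of $h$ with $\varphi(f)h\varphi(f)^{-1}\in H$ for all $f\in F$... more precisely $h\in H^{\varphi(f)}$ for all $f$ and $h$ commuting with $\varphi(f)$ whenever $\deg f=0$. (For $h\in H_\varphi$ the map $\psi$ in (II) is a well-defined homomorphism.) Groups need not be finite; divisibility is understood in the sense of cardinal arithmetic: an infinite cardinal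 is divisible by every nonzero cardinal not exceeding it. *)

(* Defs.v *)
From Stdlib Require Import ZArith.

Record Group := {
  carrier :> Type;
  gmul : carrier -> carrier -> carrier;
  gone : carrier;
  ginv : carrier -> carrier;
  gmulA : forall x y z, gmul x (gmul y z) = gmul (gmul x y) z;
  gmul1 : forall x, gmul gone x = x;
  gmulV : forall x, gmul (ginv x) x = gone
}.

Arguments gmul {g}.
Arguments gone {g}.
Arguments ginv {g}.

Definition is_hom (F G : Group) (phi : F -> G) : Prop :=
  forall x y : F, phi (gmul x y) = gmul (phi x) (phi y).

Definition is_subgroup (G : Group) (H : G -> Prop) : Prop :=
  H gone /\ (forall x y, H x -> H y -> H (gmul x y)) /\ (forall x, H x -> H (ginv x)).

Definition is_degree (F : Group) (deg : F -> Z) : Prop :=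
  (forall x y : F, deg (gmul x y) = (deg x + deg y)%Z) /\
  (forall n : Z, exists f : F, deg f = n).

Definition conj {G : Group} (x y : G) : G := gmul (ginv y) (gmul x y).

(* h in H^y = y^-1 H y  iff  y h y^-1 in H *)
Definition in_conj_sub {G : Group} (H : G -> Prop) (y h : G) : Prop :=
  H (gmul y (gmul h (ginv y))).

Definition phi_core (F G : Group) (deg : F -> Z) (phi : F -> G) (H : G -> Prop)
  (h : G) : Prop :=
  (forall f : F, in_conj_sub H (phi f) h) /\
  (forall f : F, deg f = 0%Z -> gmul h (phi f) = gmul (phi f) h).

(* Cardinal divisibility |A| divides |B|: |B| = |A| * |M| for some cardinal,
   i.e. B is in bijection with A x M for some type M. *)
Definition card_divides (A B : Type) : Prop :=
  exists (M : Type) (e : A * M -> B),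
    (forall u v, e u = e v -> u = v) /\ (forall b, exists u, e u = b).

(* Main.v *)
Require Import Defs.
From Stdlib Require Import ZArith Lia.
From Stdlib Require Import ClassicalEpsilon FunctionalExtensionality PropExtensionality ProofIrrelevance.

Ltac rassoc := repeat rewrite <- gmulA.


Lemma mulrV (G : Group) (x : G) : gmul x (ginv x) = gone.
Proof.
  transitivity (gmul (gmul (ginv (ginv x)) (ginv x)) (gmul x (ginv x))).
  { rewrite gmulV, gmul1. reflexivity. }
  rewrite <- gmulA, (gmulA _ (ginv x) x), gmulV, gmul1, gmulV. reflexivity.
Qed.

Lemma mulr1 (G : Group) (x : G) : gmul x gone = x.
Proof. rewrite <- (gmulV G x), gmulA, mulrV, gmul1. reflexivity. Qed.

Lemma mulVK (G : Group) (a x : G) : gmul (gmul a (ginv x)) x = a.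
Proof. rewrite <- gmulA, gmulV, mulr1. reflexivity. Qed.

Lemma mulKV (G : Group) (a x : G) : gmul (gmul a x) (ginv x) = a.
Proof. rewrite <- gmulA, mulrV, mulr1. reflexivity. Qed.

Lemma ginv_uniq (G : Group) (x y : G) : gmul x y = gone -> ginv x = y.
Proof. intro E. rewrite <- (gmul1 G y), <- (gmulV G x), <- gmulA, E, mulr1. reflexivity. Qed.

Lemma ginv_mul (G : Group) (x y : G) : ginv (gmul x y) = gmul (ginv y) (ginv x).
Proof. apply ginv_uniq. rewrite gmulA, mulKV, mulrV. reflexivity. Qed.

Lemma ginv_inv (G : Group) (x : G) : ginv (ginv x) = x.
Proof. apply ginv_uniq. apply gmulV. Qed.

Lemma ginv1 (G : Group) : ginv (@gone G) = gone.
Proof. apply ginv_uniq. apply gmul1. Qed.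

Ltac gsimpl := repeat (rewrite ?ginv_mul, ?ginv_inv, ?ginv1, ?gmulA, ?mulVK, ?mulKV,
   ?gmul1, ?mulr1, ?gmulV, ?mulrV).

Lemma mulIl (G : Group) (a x y : G) : gmul a x = gmul a y -> x = y.
Proof. intro E. rewrite <- (gmul1 G x), <- (gmul1 G y), <- (gmulV G a), <- !gmulA, E. reflexivity. Qed.

Lemma mulIr (G : Group) (a x y : G) : gmul x a = gmul y a -> x = y.
Proof. intro E. rewrite <- (mulKV G x a), <- (mulKV G y a), E. reflexivity. Qed.

Lemma hom1 (F G : Group) (phi : F -> G) : is_hom F G phi -> phi gone = gone.
Proof. intro Hh. apply (mulIl G (phi gone)). rewrite <- Hh, gmul1, mulr1. reflexivity. Qed.

Lemma homV (F G : Group) (phi : F -> G) (x : F) : is_hom F G phi -> phi (ginv x) = ginv (phi x).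
Proof. intro Hh. symmetry. apply ginv_uniq. rewrite <- Hh, mulrV. apply hom1; auto. Qed.

Lemma deg1 (F : Group) (deg : F -> Z) : is_degree F deg -> deg gone = 0%Z.
Proof. intros [D _]. pose proof (D gone gone) as E. rewrite gmul1 in E. lia. Qed.

Lemma degV (F : Group) (deg : F -> Z) x : is_degree F deg -> deg (ginv x) = (- deg x)%Z.
Proof. intros Hd. pose proof (proj1 Hd (ginv x) x) as E. rewrite gmulV, deg1 in E; auto. lia. Qed.

Lemma deg_ind (F : Group) (deg : F -> Z) (f1 : F) (P : F -> Prop) :
  is_degree F deg -> deg f1 = 1%Z ->
  (forall f, deg f = 0%Z -> P f) ->
  (forall f, P f -> P (gmul f f1)) ->
  (forall f, P f -> P (gmul f (ginv f1))) ->
  forall f, P f.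
Proof.
  intros Hd Hf1 H0 Hs Hp.
  assert (forall n f, deg f = n -> P f).
  { intro n. induction n using Z.peano_ind; intros f Ef.
    - auto.
    - rewrite <- (mulVK F f f1). apply Hs. apply IHn.
      rewrite (proj1 Hd), degV, Hf1 by auto. lia.
    - rewrite <- (mulKV F f f1). apply Hp. apply IHn.
      rewrite (proj1 Hd), Hf1 by auto. lia. }
  intro f. eapply H; reflexivity.
Qed.

Fixpoint npow (G : Group) (x : G) (n : nat) : G :=
  match n with O => gone | S k => gmul (npow G x k) x end.

Definition zpow (G : Group) (x : G) (n : Z) : G :=
  if (0 <=? n)%Z then npow G x (Z.to_nat n) else npow G (ginv x) (Z.to_nat (- n)).

Lemma zpow0 (G : Group) (x : G) : zpow G x 0 = gone.
Proof. reflexivity. Qed.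

Lemma zpow_succ (G : Group) (x : G) n : zpow G x (n + 1) = gmul (zpow G x n) x.
Proof.
  unfold zpow. destruct (0 <=? n)%Z eqn:E1.
  - apply Z.leb_le in E1. replace (0 <=? n + 1)%Z with true by (symmetry; apply Z.leb_le; lia).
    rewrite Z2Nat.inj_add by lia. rewrite Nat.add_comm. reflexivity.
  - apply Z.leb_gt in E1. destruct (Z.eq_dec n (-1)) as [->|Hn].
    + simpl. rewrite gmul1, gmulV. reflexivity.
    + replace (0 <=? n + 1)%Z with false by (symmetry; apply Z.leb_gt; lia).
      replace (Z.to_nat (- n)) with (S (Z.to_nat (- (n + 1)))) by lia.
      simpl. rewrite mulVK. reflexivity.
Qed.

Lemma zpow_pred (G : Group) (x : G) n : zpow G x (n - 1) = gmul (zpow G x n) (ginv x).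
Proof. replace n with ((n - 1) + 1)%Z at 2 by lia. rewrite zpow_succ, mulKV. reflexivity. Qed.

Lemma zpow_add (G : Group) (x : G) m n : zpow G x (m + n) = gmul (zpow G x m) (zpow G x n).
Proof.
  induction n using Z.peano_ind.
  - rewrite Z.add_0_r, zpow0, mulr1. reflexivity.
  - rewrite <- !Z.add_1_r, Z.add_assoc, !zpow_succ, IHn, gmulA. reflexivity.
  - rewrite <- !Z.sub_1_r, Z.add_sub_assoc, !zpow_pred, IHn, gmulA. reflexivity.
Qed.

Lemma deg_zpow (F : Group) (deg : F -> Z) (x : F) n : is_degree F deg ->
  deg (zpow F x n) = (n * deg x)%Z.
Proof.
  intro Hd. induction n using Z.peano_ind.
  - rewrite zpow0, deg1; auto.
  - rewrite <- Z.add_1_r, zpow_succ, (proj1 Hd), IHn. lia.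
  - rewrite <- Z.sub_1_r, zpow_pred, (proj1 Hd), IHn, degV by auto. lia.
Qed.



Lemma zpow1 (G : Group) (x : G) : zpow G x 1 = x.
Proof. unfold zpow. simpl. apply gmul1. Qed.
Lemma zpowm1 (G : Group) (x : G) : zpow G x (-1) = ginv x.
Proof. unfold zpow. simpl. apply gmul1. Qed.


Lemma core_H (F G : Group) (deg : F -> Z) (phi : F -> G) (H : G -> Prop) c : is_hom F G phi ->
  phi_core F G deg phi H c -> H c.
Proof.
  intros Hh [C _]. specialize (C gone). unfold in_conj_sub in C.
  rewrite hom1, ginv1, mulr1, gmul1 in C by auto. exact C.
Qed.

Lemma core_one (F G : Group) (deg : F -> Z) (phi : F -> G) (H : G -> Prop) : is_subgroup G H ->
  phi_core F G deg phi H gone.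
Proof.
  intros [H1 _]. split.
  - intro f. unfold in_conj_sub. gsimpl. exact H1.
  - intros f _. gsimpl. reflexivity.
Qed.

Lemma core_mul (F G : Group) (deg : F -> Z) (phi : F -> G) (H : G -> Prop) c d : is_subgroup G H ->
  phi_core F G deg phi H c -> phi_core F G deg phi H d -> phi_core F G deg phi H (gmul c d).
Proof.
  intros [_ [HM _]] [C1 C2] [D1 D2]. split.
  - intro f. unfold in_conj_sub in *.
    replace (gmul (phi f) (gmul (gmul c d) (ginv (phi f))))
      with (gmul (gmul (phi f) (gmul c (ginv (phi f)))) (gmul (phi f) (gmul d (ginv (phi f)))))
      by (gsimpl; reflexivity).
    apply HM; auto.
  - intros f Ef. rewrite <- gmulA, D2, gmulA, C2, gmulA by auto. reflexivity.
Qed.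

Lemma core_inv (F G : Group) (deg : F -> Z) (phi : F -> G) (H : G -> Prop) c : is_subgroup G H ->
  phi_core F G deg phi H c -> phi_core F G deg phi H (ginv c).
Proof.
  intros [_ [_ HI]] [C1 C2]. split.
  - intro f. unfold in_conj_sub in *.
    replace (gmul (phi f) (gmul (ginv c) (ginv (phi f))))
      with (ginv (gmul (phi f) (gmul c (ginv (phi f))))) by (gsimpl; reflexivity).
    apply HI; auto.
  - intros f Ef. apply (mulIl G c). rewrite gmulA, mulrV, gmul1, gmulA, C2, mulKV by auto.
    reflexivity.
Qed.

Lemma core_norm (F G : Group) (deg : F -> Z) (phi : F -> G) (H : G -> Prop) c f0 : is_degree F deg -> is_hom F G phi ->
  phi_core F G deg phi H c ->
  phi_core F G deg phi H (gmul (phi f0) (gmul c (ginv (phi f0)))).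
Proof.
  intros Hd Hh [C1 C2]. split.
  - intro f. unfold in_conj_sub in *. specialize (C1 (gmul f f0)).
    rewrite Hh in C1. revert C1. gsimpl. auto.
  - intros k Ek.
    assert (E : phi (gmul (ginv f0) (gmul k f0)) = gmul (ginv (phi f0)) (gmul (phi k) (phi f0))).
    { rewrite !Hh, homV by auto. reflexivity. }
    assert (Hc := C2 (gmul (ginv f0) (gmul k f0))).
    rewrite E in Hc. rewrite (proj1 Hd), (proj1 Hd), degV, Ek in Hc by auto.
    specialize (Hc ltac:(lia)).
    apply (mulIl G (ginv (phi f0))). apply (mulIr G (phi f0)).
    gsimpl. gsimpl. rewrite <- !gmulA in Hc |- *. gsimpl.
    rewrite <- !gmulA. exact Hc.
Qed.



Definition tw (F G : Group) (deg : F -> Z) (f1 : F) (phi : F -> G) (d : G) : F -> G :=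
  fun f => gmul (phi (gmul f (zpow F f1 (- deg f)))) (zpow G (gmul (phi f1) d) (deg f)).

Lemma tw_key (F G : Group) (deg : F -> Z) (f1 : F) (phi : F -> G) (H : G -> Prop) d :
  is_degree F deg -> deg f1 = 1%Z -> is_hom F G phi -> phi_core F G deg phi H d ->
  forall n k, deg k = 0%Z ->
  gmul (zpow G (gmul (phi f1) d) n) (phi k)
  = gmul (phi (gmul (zpow F f1 n) (gmul k (zpow F f1 (- n))))) (zpow G (gmul (phi f1) d) n).
Proof.
  intros Hd Hf1 Hh [_ Dc] n. induction n using Z.peano_ind; intros k Ek.
  - simpl. rewrite !zpow0. gsimpl. reflexivity.
  - rewrite <- Z.add_1_r.
    replace (- (n + 1))%Z with (-1 + - n)%Z by lia.
    rewrite !zpow_add, !zpow1, zpowm1.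
    set (k' := gmul f1 (gmul k (ginv f1))).
    assert (Ek' : deg k' = 0%Z).
    { unfold k'. rewrite !(proj1 Hd), degV by auto. lia. }
    assert (E1 : gmul (gmul (phi f1) d) (phi k) = gmul (phi k') (gmul (phi f1) d)).
    { unfold k'. rewrite !Hh, (homV F G phi) by auto. rewrite <- gmulA, Dc by auto. gsimpl. reflexivity. }
    rewrite <- gmulA, E1, gmulA, IHn by auto. unfold k'. rewrite ?Hh.
    gsimpl. reflexivity.
  - rewrite <- Z.sub_1_r.
    replace (- (n - 1))%Z with (1 + - n)%Z by lia.
    rewrite !zpow_pred, !zpow_add, !zpow1.
    set (k' := gmul (ginv f1) (gmul k f1)).
    assert (Ek' : deg k' = 0%Z).
    { unfold k'. rewrite !(proj1 Hd), degV by auto. lia. }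
    assert (E1 : gmul (ginv (gmul (phi f1) d)) (phi k) = gmul (phi k') (ginv (gmul (phi f1) d))).
    { assert (Dk : gmul d (phi k') = gmul (phi k') d) by (apply Dc; auto).
      unfold k' in *. rewrite !Hh, (homV F G phi) in Dk |- * by auto.
      apply (mulIl G (gmul (phi f1) d)). apply (mulIr G (gmul (phi f1) d)).
      gsimpl. repeat rewrite <- gmulA in Dk. repeat rewrite <- gmulA. rewrite Dk. gsimpl. reflexivity. }
    rewrite <- (gmulA G _ (ginv (gmul (phi f1) d)) (phi k)), E1, gmulA, IHn by auto. unfold k'. rewrite ?Hh.
    gsimpl. reflexivity.
Qed.

Lemma tw_hom (F G : Group) (deg : F -> Z) (f1 : F) (phi : F -> G) (H : G -> Prop) d :
  is_degree F deg -> deg f1 = 1%Z -> is_hom F G phi -> phi_core F G deg phi H d ->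
  is_hom F G (tw F G deg f1 phi d).
Proof.
  intros Hd Hf1 Hh Hc x y. unfold tw.
  set (a := deg x). set (b := deg y).
  rewrite (proj1 Hd x y). fold a b.
  assert (Ek : deg (gmul y (zpow F f1 (- b))) = 0%Z).
  { rewrite (proj1 Hd), deg_zpow, Hf1 by auto. unfold b. lia. }
  rewrite <- (gmulA G (phi (gmul x (zpow F f1 (- a))))).
  rewrite (gmulA G (zpow G _ a)).
  rewrite (tw_key F G deg f1 phi H d Hd Hf1 Hh Hc a _ Ek).
  rewrite <- (gmulA G (phi _) (zpow G _ a) (zpow G _ b)), <- zpow_add, gmulA, <- Hh.
  f_equal. f_equal.
  replace (- (a + b))%Z with (- b + - a)%Z by lia. rewrite zpow_add.
  assert (Ea : gmul (zpow F f1 (- a)) (zpow F f1 a) = gone).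
  { rewrite <- zpow_add. replace (- a + a)%Z with 0%Z by lia. apply zpow0. }
  rewrite !gmulA. rewrite <- (gmulA F x (zpow F f1 (- a))), Ea, mulr1. reflexivity.
Qed.

Lemma tw_ker (F G : Group) (deg : F -> Z) (f1 : F) (phi : F -> G) d f :
  deg f = 0%Z -> tw F G deg f1 phi d f = phi f.
Proof. intro E. unfold tw. rewrite E. simpl. rewrite !zpow0, !mulr1. reflexivity. Qed.

Lemma tw_f1 (F G : Group) (deg : F -> Z) (f1 : F) (phi : F -> G) d :
  is_hom F G phi -> deg f1 = 1%Z -> tw F G deg f1 phi d f1 = gmul (phi f1) d.
Proof. intros Hh E. unfold tw. rewrite E, zpowm1, zpow1, mulrV, (hom1 F G phi), gmul1 by auto. reflexivity. Qed.



Definition conjfun {F G : Group} (h : G) (phi : F -> G) : F -> G := fun f => conj (phi f) h.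

Definition Tw (F G : Group) (deg : F -> Z) (f1 : F) (phi : F -> G) (d : G) (chi : F -> G) : Prop :=
  is_hom F G chi /\ (forall f, deg f = 0%Z -> chi f = phi f) /\ chi f1 = gmul (phi f1) d.

Lemma hom_uniq (F G : Group) (deg : F -> Z) (f1 : F) (chi psi : F -> G) :
  is_degree F deg -> deg f1 = 1%Z -> is_hom F G chi -> is_hom F G psi ->
  (forall f, deg f = 0%Z -> chi f = psi f) -> chi f1 = psi f1 -> chi = psi.
Proof.
  intros Hd Hf1 Hc Hp H0 H1. apply functional_extensionality.
  apply (deg_ind F deg f1); auto.
  - intros f E. rewrite Hc, Hp, E, H1. reflexivity.
  - intros f E. rewrite Hc, Hp, (homV F G chi), (homV F G psi), E, H1 by auto. reflexivity.
Qed.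

Lemma Tw_uniq (F G : Group) (deg : F -> Z) (f1 : F) (phi : F -> G) d chi chi' : is_degree F deg -> deg f1 = 1%Z ->
  Tw F G deg f1 phi d chi -> Tw F G deg f1 phi d chi' -> chi = chi'.
Proof.
  intros Hd Hf1 [A [B C]] [A' [B' C']]. apply (hom_uniq F G deg f1); auto.
  - intros f E. rewrite B, B'; auto.
  - rewrite C, C'. reflexivity.
Qed.

Lemma tw_Tw (F G : Group) (deg : F -> Z) (f1 : F) (phi : F -> G) (H : G -> Prop) d : is_degree F deg -> deg f1 = 1%Z ->
  is_hom F G phi -> phi_core F G deg phi H d -> Tw F G deg f1 phi d (tw F G deg f1 phi d).
Proof.
  intros Hd Hf1 Hh Hc. split; [|split].
  - eapply tw_hom; eauto.
  - intros f E. apply tw_ker; auto.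
  - apply tw_f1; auto.
Qed.

Lemma conjfun_hom (F G : Group) (h : G) (chi : F -> G) : is_hom F G chi -> is_hom F G (conjfun h chi).
Proof. intros Hc x y. unfold conjfun, conj. rewrite Hc. gsimpl. reflexivity. Qed.

Lemma conjfun_comp (F G : Group) (a b : G) (chi : F -> G) : conjfun a (conjfun b chi) = conjfun (gmul b a) chi.
Proof. apply functional_extensionality. intro f. unfold conjfun, conj. gsimpl. reflexivity. Qed.

Lemma conjfun_one (F G : Group) (chi : F -> G) : conjfun gone chi = chi.
Proof. apply functional_extensionality. intro f. unfold conjfun, conj. gsimpl. reflexivity. Qed.

Lemma Tw_trans (F G : Group) (deg : F -> Z) (f1 : F) (phi : F -> G) d chi d' chi' :
  Tw F G deg f1 phi d chi -> Tw F G deg f1 chi d' chi' -> Tw F G deg f1 phi (gmul d d') chi'.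
Proof.
  intros [A [B C]] [A' [B' C']]. split; [|split]; auto.
  - intros f E. rewrite B', B; auto.
  - rewrite C', C. gsimpl. reflexivity.
Qed.

Lemma Tw_inv (F G : Group) (deg : F -> Z) (f1 : F) (phi : F -> G) d chi : is_hom F G phi ->
  Tw F G deg f1 phi d chi -> Tw F G deg f1 chi (ginv d) phi.
Proof.
  intros Hh [A [B C]]. split; [|split]; auto.
  - intros f E. rewrite B; auto.
  - rewrite C. gsimpl. reflexivity.
Qed.

Lemma Tw_conj (F G : Group) (deg : F -> Z) (f1 : F) (chi : F -> G) d chi' (h : G) :
  Tw F G deg f1 chi d chi' ->
  Tw F G deg f1 (conjfun h chi) (gmul (ginv h) (gmul d h)) (conjfun h chi').
Proof.
  intros [A [B C]]. split; [|split].
  - apply conjfun_hom; auto.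
  - intros f E. unfold conjfun. rewrite B; auto.
  - unfold conjfun, conj. rewrite C. gsimpl. reflexivity.
Qed.

Lemma core_conj (F G : Group) (deg : F -> Z) (chi : F -> G) (H : G -> Prop) c h : is_subgroup G H -> H h ->
  phi_core F G deg chi H c ->
  phi_core F G deg (conjfun h chi) H (gmul (ginv h) (gmul c h)).
Proof.
  intros [H1 [HM HI]] Hh [C1 C2]. split.
  - intro f. unfold in_conj_sub, conjfun, conj in *. specialize (C1 f).
    replace (gmul (gmul (ginv h) (gmul (chi f) h))
       (gmul (gmul (ginv h) (gmul c h)) (ginv (gmul (ginv h) (gmul (chi f) h)))))
     with (gmul (ginv h) (gmul (gmul (chi f) (gmul c (ginv (chi f)))) h)) by (gsimpl; reflexivity).
    apply HM; [apply HI; exact Hh | apply HM; [exact C1 | exact Hh]].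
  - intros f E. unfold conjfun, conj. specialize (C2 f E).
    gsimpl. rassoc. rewrite (gmulA G c (chi f)), C2. gsimpl. reflexivity.
Qed.



Lemma core_tw (F G : Group) (deg : F -> Z) (f1 : F) (phi : F -> G) (H : G -> Prop) d chi c :
  is_degree F deg -> deg f1 = 1%Z -> is_subgroup G H -> is_hom F G phi ->
  phi_core F G deg phi H d -> Tw F G deg f1 phi d chi ->
  phi_core F G deg phi H c -> phi_core F G deg chi H c.
Proof.
  intros Hd Hf1 HH Hh Hdc [Ch [Ck Cf1]] Hc.
  assert (P : forall f c, phi_core F G deg phi H c ->
             phi_core F G deg phi H (gmul (chi f) (gmul c (ginv (chi f))))).
  { refine (deg_ind F deg f1 (fun f => forall c, phi_core F G deg phi H c -> phi_core F G deg phi H (gmul (chi f) (gmul c (ginv (chi f))))) Hd Hf1 _ _ _).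
    - intros f E c0 Hc0. rewrite Ck by auto. apply core_norm; auto.
    - intros f IH c0 Hc0. rewrite Ch, Cf1.
      replace (gmul (gmul (chi f) (gmul (phi f1) d)) (gmul c0 (ginv (gmul (chi f) (gmul (phi f1) d)))))
        with (gmul (chi f) (gmul (gmul (phi f1) (gmul (gmul d (gmul c0 (ginv d))) (ginv (phi f1)))) (ginv (chi f))))
        by (gsimpl; reflexivity).
      apply IH. apply core_norm; auto.
      apply core_mul; auto. apply core_mul; auto. apply core_inv; auto.
    - intros f IH c0 Hc0. rewrite Ch, (homV F G chi), Cf1 by auto.
      replace (gmul (gmul (chi f) (ginv (gmul (phi f1) d))) (gmul c0 (ginv (gmul (chi f) (ginv (gmul (phi f1) d))))))
        with (gmul (chi f) (gmul (gmul (ginv d) (gmul (gmul (phi (ginv f1)) (gmul c0 (ginv (phi (ginv f1))))) d)) (ginv (chi f))))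
        by (rewrite (homV F G phi) by auto; gsimpl; reflexivity).
      apply IH.
      apply core_mul; auto. apply core_inv; auto. apply core_mul; auto. apply core_norm; auto. }
  split.
  - intro f. unfold in_conj_sub. apply (core_H F G deg phi H); auto.
  - intros f E. rewrite Ck by auto. apply (proj2 Hc); auto.
Qed.

Lemma core_D (F G : Group) (deg : F -> Z) (f1 : F) (phi : F -> G) (H : G -> Prop) k k' chi chi' u :
  is_degree F deg -> deg f1 = 1%Z -> is_subgroup G H -> is_hom F G phi ->
  phi_core F G deg phi H k -> phi_core F G deg phi H k' ->
  Tw F G deg f1 phi k chi -> Tw F G deg f1 phi k' chi' ->
  chi = conjfun u chi' -> H u -> phi_core F G deg phi H u.
Proof.
  intros Hd Hf1 HH Hh Hk Hk' [Ch [Ck Cf1]] [Ch' [Ck' Cf1']] Echi Hu.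
  assert (Ecomm : forall x, deg x = 0%Z -> gmul u (phi x) = gmul (phi x) u).
  { intros x Ex. assert (E := Ck x Ex). rewrite Echi in E. unfold conjfun, conj in E.
    rewrite Ck' in E by auto. apply (mulIl G (ginv u)). gsimpl. rassoc. symmetry. exact E. }
  set (g := phi f1).
  assert (E' : gmul u (gmul g k) = gmul g (gmul k' u)).
  { assert (E := Cf1). rewrite Echi in E. unfold conjfun, conj in E. rewrite Cf1' in E.
    fold g in E. rewrite <- E. gsimpl. reflexivity. }
  set (Q := fun f => exists a b, phi_core F G deg phi H a /\ phi_core F G deg phi H b /\
      gmul (phi f) (gmul u (ginv (phi f))) = gmul a (gmul u b)).
  assert (step : forall f y a' b', Q f -> phi_core F G deg phi H a' -> phi_core F G deg phi H b' ->
     gmul y (gmul u (ginv y)) = gmul a' (gmul u b') ->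
     exists a b, phi_core F G deg phi H a /\ phi_core F G deg phi H b /\
      gmul (gmul (phi f) y) (gmul u (ginv (gmul (phi f) y))) = gmul a (gmul u b)).
  { intros f y a' b' [a [b [Ha [Hb Ef]]]] Ha' Hb' Ey.
    exists (gmul (gmul (phi f) (gmul a' (ginv (phi f)))) a).
    exists (gmul b (gmul (phi f) (gmul b' (ginv (phi f))))).
    split; [|split].
    - apply core_mul; auto. apply core_norm; auto.
    - apply core_mul; auto. apply core_norm; auto.
    - transitivity (gmul (phi f) (gmul (gmul y (gmul u (ginv y))) (ginv (phi f)))).
      { gsimpl. reflexivity. }
      transitivity (gmul (gmul (phi f) (gmul a' (ginv (phi f)))) (gmul (gmul a (gmul u b)) (gmul (phi f) (gmul b' (ginv (phi f)))))).
      2: { gsimpl. reflexivity. }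
      rewrite <- Ef, Ey. gsimpl. reflexivity. }
  assert (AQ : forall f, Q f).
  { refine (deg_ind F deg f1 Q Hd Hf1 _ _ _).
    - intros f E. exists gone, gone. split; [|split]; try apply core_one; auto.
      rewrite (gmulA G (phi f) u), <- Ecomm by auto. gsimpl. reflexivity.
    - intros f Qf. unfold Q. rewrite Hh. fold g.
      apply (step f g (gmul g (gmul (ginv k') (ginv g))) (gmul g (gmul k (ginv g)))); auto.
      + apply core_norm; auto. apply core_inv; auto.
      + apply core_norm; auto.
      + apply (mulIr G g). gsimpl. rassoc. rewrite E'. gsimpl. reflexivity.
    - intros f Qf. unfold Q. rewrite Hh, (homV F G phi) by auto. fold g.
      apply (step f (ginv g) k' (ginv k)); auto.
      + apply core_inv; auto.
      + apply (mulIr G k). gsimpl. rassoc. rewrite E'. gsimpl. reflexivity. }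
  split.
  - intro f. unfold in_conj_sub. destruct (AQ f) as [a [b [Ha [Hb Ef]]]]. rewrite Ef.
    destruct HH as [H1 [HM HI]].
    apply HM; [eapply (core_H F G deg phi H); eauto | apply HM; auto; eapply (core_H F G deg phi H); eauto].
  - intros f E. apply Ecomm; auto.
Qed.



Definition Setup (F G : Group) (deg : F -> Z) (f1 : F) (H : G -> Prop) (Phi : (F -> G) -> Prop) : Prop :=
  is_degree F deg /\ deg f1 = 1%Z /\ is_subgroup G H /\ (forall phi, Phi phi -> is_hom F G phi) /\
  (forall (h : G) (phi : F -> G), H h -> Phi phi -> Phi (fun f => conj (phi f) h)) /\
  (forall (phi psi : F -> G) (h : G) (f1 : F),
     Phi phi -> phi_core F G deg phi H h ->
     is_hom F G psi ->
     (forall f, deg f = 0%Z -> psi f = phi f) ->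
     deg f1 = 1%Z -> psi f1 = gmul (phi f1) h ->
     Phi psi).

Definition cls (F G : Group) (deg : F -> Z) (f1 : F) (H : G -> Prop) (phi psi : F -> G) : Prop :=
  exists h d chi, H h /\ phi_core F G deg phi H d /\ Tw F G deg f1 phi d chi /\ psi = conjfun h chi.

Lemma cls_refl F G deg f1 H Phi phi : Setup F G deg f1 H Phi -> is_hom F G phi ->
  cls F G deg f1 H phi phi.
Proof.
  intros (Hd & Hf1 & HH & HP & HI & HII) Hh. exists gone, gone, phi.
  split; [apply HH|split; [apply core_one; auto|split]].
  - split; [auto|split]; auto. rewrite mulr1. reflexivity.
  - symmetry. apply conjfun_one.
Qed.

Lemma cls_Phi F G deg f1 H Phi phi psi : Setup F G deg f1 H Phi -> Phi phi ->
  cls F G deg f1 H phi psi -> Phi psi.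
Proof.
  intros (Hd & Hf1 & HH & HP & HI & HII) Hp (h & d & chi & Hh & Hc & [Ch [Ck Cf]] & ->).
  apply HI; auto. eapply HII; eauto.
Qed.

Lemma cls_trans F G deg f1 H Phi phi psi rho : Setup F G deg f1 H Phi -> is_hom F G phi ->
  cls F G deg f1 H phi psi -> cls F G deg f1 H psi rho -> cls F G deg f1 H phi rho.
Proof.
  intros S Hp (h & d & chi & Hh & Hc & Tc & ->) (h' & d' & chi' & Hh' & Hc' & Tc' & ->).
  destruct S as (Hd & Hf1 & HH & HP & HI & HII).
  pose proof HH as (H1 & HM & HIv).
  assert (Hchi : is_hom F G chi) by apply Tc.
  assert (Eb : conjfun (ginv h) (conjfun h chi) = chi).
  { rewrite conjfun_comp, mulrV, conjfun_one. reflexivity. }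
  pose proof (Tw_conj F G deg f1 _ _ _ (ginv h) Tc') as T2. rewrite Eb in T2.
  pose proof (core_conj F G deg (conjfun h chi) H d' (ginv h) HH (HIv _ Hh) Hc') as C2.
  rewrite Eb in C2.
  assert (C3 : phi_core F G deg phi H (gmul (ginv (ginv h)) (gmul d' (ginv h)))).
  { apply (core_tw F G deg f1 chi H (ginv d) phi); auto.
    - apply core_inv; auto. apply (core_tw F G deg f1 phi H d chi); auto.
    - apply Tw_inv; auto. }
  exists (gmul h h'), (gmul d (gmul (ginv (ginv h)) (gmul d' (ginv h)))), (conjfun (ginv h) chi').
  split; [auto|split; [apply core_mul; auto|split]].
  - eapply Tw_trans; eauto.
  - rewrite !conjfun_comp. f_equal. gsimpl. reflexivity.
Qed.

Lemma cls_sym F G deg f1 H Phi phi psi : Setup F G deg f1 H Phi -> is_hom F G phi ->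
  cls F G deg f1 H phi psi -> cls F G deg f1 H psi phi.
Proof.
  intros S Hp (h & d & chi & Hh & Hc & Tc & ->).
  destruct S as (Hd & Hf1 & HH & HP & HI & HII).
  pose proof HH as (H1 & HM & HIv).
  assert (Hchi : is_hom F G chi) by apply Tc.
  exists (ginv h), (gmul (ginv h) (gmul (ginv d) h)), (conjfun h phi).
  split; [auto|split; [|split]].
  - apply core_conj; auto. apply core_inv; auto. apply (core_tw F G deg f1 phi H d chi); auto.
  - apply Tw_conj. apply Tw_inv; auto.
  - rewrite conjfun_comp, mulrV, conjfun_one. reflexivity.
Qed.



Definition rep (F G : Group) (deg : F -> Z) (H : G -> Prop) (m : F -> G) (h : G) : G :=
  epsilon (inhabits (@gone G)) (fun x => phi_core F G deg m H (gmul x (ginv h))).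

Lemma rep_spec F G deg H m h : is_subgroup G H ->
  phi_core F G deg m H (gmul (rep F G deg H m h) (ginv h)).
Proof.
  intros HH. unfold rep. apply epsilon_spec.
  exists h. rewrite mulrV. apply core_one; auto.
Qed.

Lemma rep_eq F G deg H m h h' : is_subgroup G H ->
  phi_core F G deg m H (gmul h (ginv h')) -> rep F G deg H m h = rep F G deg H m h'.
Proof.
  intros HH Hc. unfold rep. f_equal. apply functional_extensionality. intro x.
  apply propositional_extensionality. split; intro K.
  - replace (gmul x (ginv h')) with (gmul (gmul x (ginv h)) (gmul h (ginv h'))) by (gsimpl; reflexivity).
    apply core_mul; auto.
  - replace (gmul x (ginv h)) with (gmul (gmul x (ginv h')) (ginv (gmul h (ginv h')))) by (gsimpl; reflexivity).
    apply core_mul; auto. apply core_inv; auto.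
Qed.

Lemma rep_H F G deg H m h : is_subgroup G H -> is_hom F G m -> H h -> H (rep F G deg H m h).
Proof.
  intros HH Hm Hh. replace (rep F G deg H m h) with (gmul (gmul (rep F G deg H m h) (ginv h)) h)
    by (gsimpl; reflexivity).
  apply HH; auto. eapply core_H; eauto. apply rep_spec; auto.
Qed.

Definition Emap (F G : Group) (deg : F -> Z) (f1 : F) (H : G -> Prop) (m : F -> G) (h : G) : F -> G :=
  conjfun (rep F G deg H m h) (tw F G deg f1 m (gmul h (ginv (rep F G deg H m h)))).

Lemma k_core F G deg H m h : is_subgroup G H ->
  phi_core F G deg m H (gmul h (ginv (rep F G deg H m h))).
Proof.
  intros HH. replace (gmul h (ginv (rep F G deg H m h))) with (ginv (gmul (rep F G deg H m h) (ginv h)))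
    by (gsimpl; reflexivity).
  apply core_inv; auto. apply rep_spec; auto.
Qed.

Lemma E_cls F G deg f1 H Phi m h : Setup F G deg f1 H Phi -> is_hom F G m -> H h ->
  cls F G deg f1 H m (Emap F G deg f1 H m h).
Proof.
  intros (Hd & Hf1 & HH & HP & HI & HII) Hm Hh.
  exists (rep F G deg H m h), (gmul h (ginv (rep F G deg H m h))), (tw F G deg f1 m (gmul h (ginv (rep F G deg H m h)))).
  split; [apply rep_H; auto|split; [apply k_core; auto|split]].
  - eapply tw_Tw; eauto. apply k_core; auto.
  - reflexivity.
Qed.

Lemma E_inj F G deg f1 H Phi m h h' : Setup F G deg f1 H Phi -> is_hom F G m -> H h -> H h' ->
  Emap F G deg f1 H m h = Emap F G deg f1 H m h' -> h = h'.
Proof.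
  intros S Hm Hh Hh' E. pose proof S as (Hd & Hf1 & HH & HP & HI & HII).
  unfold Emap in E.
  set (r := rep F G deg H m h) in *. set (r' := rep F G deg H m h') in *.
  assert (Kk := k_core F G deg H m h HH). assert (Kk' := k_core F G deg H m h' HH).
  fold r in Kk. fold r' in Kk'.
  set (k := gmul h (ginv r)) in *. set (k' := gmul h' (ginv r')) in *.
  assert (T := tw_Tw F G deg f1 m H k Hd Hf1 Hm Kk).
  assert (T' := tw_Tw F G deg f1 m H k' Hd Hf1 Hm Kk').
  assert (E2 : tw F G deg f1 m k = conjfun (gmul r' (ginv r)) (tw F G deg f1 m k')).
  { rewrite <- (conjfun_one F G (tw F G deg f1 m k)), <- (mulrV G r), <- conjfun_comp, E,
      conjfun_comp. reflexivity. }
  assert (Hr : H r) by (apply rep_H; auto). assert (Hr' : H r') by (apply rep_H; auto).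
  assert (Cu := core_D F G deg f1 m H k k' _ _ _ Hd Hf1 HH Hm Kk Kk' T T' E2
                  ltac:(apply HH; auto; apply HH; auto)).
  assert (Err : r = r').
  { unfold r, r'. rewrite (rep_eq F G deg H m h r HH Kk), (rep_eq F G deg H m h' r' HH Kk').
    symmetry. apply rep_eq; auto. }
  rewrite <- Err, mulrV, conjfun_one in E2.
  assert (E3 := f_equal (fun f => f f1) E2). simpl in E3.
  rewrite !tw_f1 in E3 by auto. apply mulIl in E3.
  unfold k, k' in E3. rewrite <- Err in E3. apply mulIr in E3. exact E3.
Qed.

Lemma E_surj F G deg f1 H Phi m psi : Setup F G deg f1 H Phi -> is_hom F G m ->
  cls F G deg f1 H m psi -> exists h, H h /\ Emap F G deg f1 H m h = psi.
Proof.
  intros S Hm (h & d & chi & Hh & Hc & Tc & ->). pose proof S as (Hd & Hf1 & HH & HP & HI & HII).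
  set (r := rep F G deg H m h).
  set (v := gmul h (ginv r)).
  assert (Kv : phi_core F G deg m H v) by (apply k_core; auto).
  set (d2 := gmul (gmul (m (ginv f1)) (gmul (ginv v) (ginv (m (ginv f1))))) (gmul d v)).
  assert (K2 : phi_core F G deg m H d2).
  { apply core_mul; auto. apply core_norm; auto. apply core_inv; auto. apply core_mul; auto. }
  assert (Hr : H r) by (apply rep_H; auto).
  exists (gmul d2 r). split.
  { apply HH; auto. eapply core_H; eauto. }
  assert (Er : rep F G deg H m (gmul d2 r) = r).
  { unfold r at 2. apply rep_eq; auto.
    replace (gmul (gmul d2 r) (ginv h)) with (gmul d2 (ginv v)) by (unfold v; gsimpl; reflexivity).
    apply core_mul; auto. apply core_inv; auto. }
  unfold Emap. rewrite Er. rewrite mulKV.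
  replace (conjfun h chi) with (conjfun (gmul v r) chi) by (f_equal; unfold v; gsimpl; reflexivity).
  rewrite <- conjfun_comp. f_equal.
  apply (Tw_uniq F G deg f1 m d2); auto.
  - eapply tw_Tw; eauto.
  - destruct Tc as [Ch [Ck Cf]]. split; [|split].
    + apply conjfun_hom; auto.
    + intros x Ex. unfold conjfun, conj. rewrite Ck by auto.
      rewrite <- (proj2 Kv x Ex). gsimpl. reflexivity.
    + unfold conjfun, conj. rewrite Cf. unfold d2. rewrite (homV F G m) by auto. gsimpl. reflexivity.
Qed.


Definition canon (F G : Group) (deg : F -> Z) (f1 : F) (H : G -> Prop) (Phi : (F -> G) -> Prop)
  (phi : F -> G) : F -> G :=
  epsilon (inhabits (fun _ : F => @gone G)) (fun psi => Phi psi /\ cls F G deg f1 H psi phi).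

Lemma canon_spec F G deg f1 H Phi phi : Setup F G deg f1 H Phi -> Phi phi ->
  Phi (canon F G deg f1 H Phi phi) /\ cls F G deg f1 H (canon F G deg f1 H Phi phi) phi.
Proof.
  intros S Hp. unfold canon. apply epsilon_spec. exists phi. split; auto.
  apply (cls_refl F G deg f1 H Phi); auto. apply S; auto.
Qed.

Lemma canon_eq F G deg f1 H Phi phi phi' : Setup F G deg f1 H Phi -> Phi phi ->
  cls F G deg f1 H phi phi' -> canon F G deg f1 H Phi phi = canon F G deg f1 H Phi phi'.
Proof.
  intros S Hp Hc. pose proof S as (Hd & Hf1 & HH & HP & HI & HII).
  unfold canon. f_equal. apply functional_extensionality. intro psi.
  apply propositional_extensionality. split; intros [Pp Cp]; split; auto.
  - eapply cls_trans; eauto.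
  - eapply cls_trans; eauto. eapply cls_sym; eauto.
Qed.

Lemma Emap_Phi F G deg f1 H Phi m h : Setup F G deg f1 H Phi -> Phi m -> H h ->
  Phi (Emap F G deg f1 H m h).
Proof.
  intros S Pm Hh. eapply cls_Phi; eauto. apply E_cls with Phi; auto. apply S; auto.
Qed.

Lemma main_aux F G deg f1 H Phi : Setup F G deg f1 H Phi ->
  card_divides {h : G | H h} {phi : F -> G | Phi phi}.
Proof.
  intros S. pose proof S as (Hd & Hf1 & HH & HP & HI & HII).
  exists {m : F -> G | Phi m /\ canon F G deg f1 H Phi m = m}.
  exists (fun p => exist _ (Emap F G deg f1 H (proj1_sig (snd p)) (proj1_sig (fst p)))
                 (Emap_Phi F G deg f1 H Phi _ _ S (proj1 (proj2_sig (snd p))) (proj2_sig (fst p)))).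
  split.
  - intros [[h Hh] [m [Pm Cm]]] [[h' Hh'] [m' [Pm' Cm']]] E. simpl in E.
    apply (f_equal (@proj1_sig _ _)) in E. simpl in E.
    assert (C1 := E_cls F G deg f1 H Phi m h S (HP _ Pm) Hh).
    assert (C2 := E_cls F G deg f1 H Phi m' h' S (HP _ Pm') Hh').
    rewrite E in C1.
    assert (C3 : cls F G deg f1 H m m').
    { eapply cls_trans; eauto. eapply cls_sym; eauto. }
    assert (Em : m = m').
    { rewrite <- Cm, <- Cm'. eapply canon_eq; eauto. }
    subst m'.
    assert (Eh := E_inj F G deg f1 H Phi m h h' S (HP _ Pm) Hh Hh' E). subst h'.
    f_equal; f_equal; apply proof_irrelevance.
  - intros [psi Ppsi].
    destruct (canon_spec F G deg f1 H Phi psi S Ppsi) as [Pm Cm].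
    set (m := canon F G deg f1 H Phi psi) in *.
    assert (Cmm : canon F G deg f1 H Phi m = m).
    { unfold m at 2. apply canon_eq; auto. }
    destruct (E_surj F G deg f1 H Phi m psi S (HP _ Pm) Cm) as [h [Hh Eh]].
    exists (exist _ h Hh, exist _ m (Logic.conj Pm Cmm)). simpl.
    revert Ppsi. rewrite <- Eh. intro Ppsi. f_equal. apply proof_irrelevance.
Qed.

Theorem mainTheorem1 (F G : Group) (deg : F -> Z) (H : G -> Prop)
  (Phi : (F -> G) -> Prop) :
  is_degree F deg ->
  is_subgroup G H ->
  (forall phi, Phi phi -> is_hom F G phi) ->
  (* (I) invariance under conjugation by elements of H *)
  (forall (h : G) (phi : F -> G), H h -> Phi phi ->
     Phi (fun f => conj (phi f) h)) ->
  (* (II) *)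
  (forall (phi psi : F -> G) (h : G) (f1 : F),
     Phi phi -> phi_core F G deg phi H h ->
     is_hom F G psi ->
     (forall f, deg f = 0%Z -> psi f = phi f) ->
     deg f1 = 1%Z -> psi f1 = gmul (phi f1) h ->
     Phi psi) ->
  card_divides {h : G | H h} {phi : F -> G | Phi phi}.
Proof.
  intros Hd HH HP HI HII.
  destruct (proj2 Hd 1%Z) as [f1 Hf1].
  apply (main_aux F G deg f1 H Phi).
  split; [exact Hd|split; [exact Hf1|split; [exact HH|split; [exact HP|split; [exact HI|exact HII]]]]].
Qed.
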